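(* Let $p>2$ be a prime. For integers $a,b$ define the Kloosterman sum $K(a,b)=\sum_{x=1}^{p-1} e_p\left(ax+b\overline{x}\right)$, where $\overline{x}$ denotes the inverse of $x$ modulo $p$ and $e_p(\alpha)=\exp\left(\frac{2\pi i\alpha}{p}\right)$. Then for any integers $a,b$ with $p\nmid ab$ we have \[ K(a,b)^2 = p + \sum_{l=1}^{p} \left(\frac{l^2-4l}{p}\right) K(a,lb), \] where $\left(\frac{\cdot}{p}\right)$ is the Legendre symbol.
   Context: $\left(\frac{\cdot}{p}\right)$ denotes the Legendre symbol modulo $p$ (with value $0$ at multiples of $p$). *)

(* Defs.v *)
From mathcomp Require Import all_boot all_algebra.
From mathcomp Require Import reals trigo.
From mathcomp Require Export complex.
Import GRing.Theory Num.Theory.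
Local Open Scope ring_scope.
Local Open Scope complex_scope.

Definition ep (R : realType) (p : nat) (k : int) : R[i] :=
  cos (2 * pi * k%:~R / p%:R) +i* sin (2 * pi * k%:~R / p%:R).

Definition inv_mod (p x : nat) : nat := nat_of_ord ((x%:R : 'F_p)^-1).

Definition kloosterman (R : realType) (p : nat) (a b : int) : R[i] :=
  \sum_(1 <= x < p) ep R p (a * x%:Z + b * (inv_mod p x)%:Z).

Definition legendre (p : nat) (a : int) : int :=
  if (p%:Z %| a)%Z then 0
  else if [exists x : 'I_p, (p%:Z %| (x%:Z) ^+ 2 - a)%Z] then 1 else -1.

(* Main.v *)
Require Import Defs.
From mathcomp Require Import all_boot all_algebra.
From mathcomp Require Import reals trigo complex.
From mathcomp Require Import ring lra order.
Import Order.TTheory GRing.Theory Num.Theory.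
Local Open Scope ring_scope.
Local Open Scope complex_scope.

Section EP.
Variable R : realType.
Variable p : nat.
Hypothesis p_gt0 : (0 < p)%N.

Let th (k : int) : R := 2 * pi * k%:~R / p%:R.

Lemma periodic_int (f : R -> R) (T : R) : periodic f T ->
  forall (m : int) x, f (x + T *~ m) = f x.
Proof.
move=> fT [] n x; first exact: (periodicn fT).
rewrite NegzE mulrNz -[in RHS](subrK (T *+ n.+1) x).
by rewrite (periodicn fT).
Qed.

Lemma epD (j k : int) : ep R p (j + k) = ep R p j * ep R p k.
Proof.
rewrite /ep.
have -> : 2 * (pi : R) * (j + k)%:~R / p%:R = 2 * pi * j%:~R / p%:R + 2 * pi * k%:~R / p%:R.
  by rewrite intrD; ring.
rewrite cosD sinD.
apply/eqP; rewrite eq_complex /=; apply/andP; split; apply/eqP; ring.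
Qed.

Lemma ep_mod (j k : int) : (p%:Z %| k - j)%Z -> ep R p k = ep R p j.
Proof.
case/dvdzP => q hq.
have -> : k = j + q * p%:Z by rewrite -hq addrC subrK.
have pn0 : (p%:R : R) != 0 by rewrite pnatr_eq0 -lt0n.
rewrite /ep.
have -> : 2 * (pi : R) * (j + q * p%:Z)%:~R / p%:R = 2 * pi * j%:~R / p%:R + (pi *+ 2) *~ q.
  rewrite -(mulrzr (pi *+ 2 : R) q) intrD intrM -[p%:~R]/(p%:R : R); field; exact: pn0.
have h1 := periodic_int _ _ (@cosD2pi R) q (2 * pi * j%:~R / p%:R).
have h2 := periodic_int _ _ (@sinD2pi R) q (2 * pi * j%:~R / p%:R).
by rewrite h1 h2.
Qed.
End EP.

Lemma ep1_neq1 (R : realType) (p : nat) : (2 < p)%N -> ep R p 1 != 1.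
Proof.
move=> p2; rewrite /ep; apply/negP; rewrite eq_complex /= => /andP [_ /eqP h].
have p0 : (0 : R) < p%:R by rewrite ltr0n; apply: ltn_trans p2.
have : 0 < sin (2 * pi * (1%:~R : R) / p%:R).
  apply: sin_gt0_pi; apply/andP; split.
    by rewrite mulr1 divr_gt0 // mulr_gt0 // pi_gt0.
  rewrite mulr1 ltr_pdivrMr // mulrC ltr_pM2l ?pi_gt0 //.
  by rewrite (ltr_nat R 2 p).
by rewrite h ltxx.
Qed.

Section Fp.
Variable R : realType.
Variable p : nat.
Hypothesis p_pr : prime p.
Hypothesis p2 : (2 < p)%N.
Local Notation F := 'F_p.

Definition E (x : F) : R[i] := ep R p (nat_of_ord x)%:Z.

Lemma p_gt0 : (0 < p)%N. Proof. exact: prime_gt0. Qed.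

Lemma c1 (z : int) : ((z%:~R : F) == 0) = (p%:Z %| z)%Z.
Proof.
rewrite dvdzE /=; case: z => n.
  by rewrite -[(n%:Z)%:~R]/(n%:R : F) -(dvdn_pcharf (pchar_Fp p_pr)).
rewrite NegzE rmorphN /= oppr_eq0.
by rewrite -[(n.+1%:Z)%:~R]/(n.+1%:R : F) -(dvdn_pcharf (pchar_Fp p_pr)).
Qed.

Lemma natF (x : F) : ((nat_of_ord x)%:R : F) = x.
Proof. exact: natr_Zp. Qed.

Lemma L1 (k : int) : ep R p k = E (k%:~R).
Proof.
rewrite /E; apply: ep_mod; first exact: p_gt0. rewrite -c1 rmorphB /=.
by rewrite -[((nat_of_ord _)%:Z)%:~R]/(_%:R : F) natF subrr.
Qed.

Lemma ED (x y : F) : E (x + y) = E x * E y.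
Proof.
have h : forall z : F, (((nat_of_ord z)%:Z)%:~R : F) = z := natF.
have -> : x + y = (((nat_of_ord x)%:Z + (nat_of_ord y)%:Z)%:~R : F) by rewrite rmorphD /= !h.
by rewrite -L1 epD.
Qed.

Lemma E0 : E 0 = 1.
Proof. rewrite /E /ep /= mulr0 mul0r cos0 sin0. by []. Qed.

Lemma E1 : E 1 != 1.
Proof. by rewrite -[1 : F]/((1%:Z)%:~R) -L1 ep1_neq1. Qed.

Lemma charsum (c : F) : c != 0 -> \sum_(y : F) E (y * c) = 0.
Proof.
move=> c0.
set S := \sum_(y : F) E (y * c).
have hS : S * E 1 = S.
  rewrite /S mulr_suml [RHS](reindex_inj (addIr c^-1)) /=.
  by apply: eq_bigr => y _; rewrite mulrDl mulVf // ED.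
have : S * (E 1 - 1) = 0 by rewrite mulrBr hS mulr1 subrr.
by move/eqP; rewrite mulf_eq0 subr_eq0 (negPf E1) orbF => /eqP.
Qed.

Lemma two_neq0 : (2 : F) != 0.
Proof.
rewrite -[2]/(2%:R : F) -(dvdn_pcharf (pchar_Fp p_pr)).
by apply/negP => /(dvdn_leq (isT : (0 < 2)%N)); rewrite leqNgt p2.
Qed.

Lemma four_neq0 : (4 : F) != 0.
Proof. have -> : (4 : F) = 2 * 2 by ring. by rewrite mulf_neq0 // two_neq0. Qed.

Lemma sumF (G : F -> R[i]) : \sum_(0 <= x < p) G (x%:R) = \sum_(y : F) G y.
Proof.
transitivity (\sum_(y : F) G ((nat_of_ord y)%:R)); last by apply: eq_bigr => y _; rewrite natF.
by rewrite -(big_mkord xpredT (fun i => G i%:R)) (Fp_cast p_pr).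
Qed.

Definition Kp (al be : F) : R[i] := \sum_(x : F | x != 0) E (al * x + be * x^-1).

Lemma sum_nz (G : F -> R[i]) : \sum_(y : F) G y = G 0 + \sum_(y : F | y != 0) G y.
Proof. by rewrite (bigD1 0) //=. Qed.

Lemma klo (a b : int) : kloosterman R p a b = Kp (a%:~R) (b%:~R).
Proof.
have h := sumF (fun y => E (a%:~R * y + b%:~R * y^-1)).
rewrite sum_nz big_ltn ?p_gt0 // in h.
move/addrI: h => h; rewrite /Kp -h /kloosterman; apply: eq_bigr => x _.
rewrite L1 rmorphD !rmorphM /= /inv_mod.
by rewrite -[((nat_of_ord _)%:Z)%:~R]/(_%:R : F) natF.
Qed.

Definition chi (d : F) : R[i] := (#|[pred t : F | t ^+ 2 == d]|)%:R - 1.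

Lemma c3 (z : int) : ((legendre p z)%:~R : R[i]) = chi (z%:~R).
Proof.
rewrite /legendre /chi -c1.
case: eqP => [-> | dn0].
  rewrite (eq_card (B := pred1 0)); first by rewrite card1 subrr.
  by move=> t; rewrite !inE sqrf_eq0.
case: existsP => [[x hx] | hno].
  set t0 : F := (nat_of_ord x)%:R.
  have ht0 : t0 ^+ 2 = z%:~R.
    apply/eqP; rewrite -subr_eq0; move: hx; rewrite -c1 rmorphB rmorphXn /=.
    by rewrite -[((nat_of_ord _)%:Z)%:~R]/(_%:R : F).
  rewrite (eq_card (B := pred2 t0 (- t0))); last first.
    by move=> t; rewrite !inE -ht0 eqf_sqr.
  rewrite card2.
  have -> : t0 != - t0.
    apply/negP => /eqP h; apply: dn0; rewrite -ht0.
    have : 2 * t0 = 0 by rewrite mulr2n mulrDl mul1r {1}h addNr.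
    by move/eqP; rewrite mulf_eq0 (negPf two_neq0) /= => /eqP ->; rewrite expr0n.
  by rewrite -addn1 natrD addrK.
rewrite eq_card0 ?sub0r //.
move=> t; rewrite !inE; apply/negP => /eqP ht; apply: hno.
have ltp : (nat_of_ord t < p)%N by rewrite -{2}(Fp_cast p_pr) ltn_ord.
exists (Ordinal ltp); rewrite -c1 rmorphB rmorphXn /=.
by rewrite -[((nat_of_ord _)%:Z)%:~R]/(_%:R : F) natF ht subrr.
Qed.

Lemma sumK0 (al be : F) : be != 0 -> \sum_(y : F) Kp al (y * be) = 0.
Proof.
move=> be0; rewrite /Kp exchange_big /=; apply: big1 => x x0.
transitivity (E (al * x) * \sum_(y : F) E (y * (be * x^-1))).
  by rewrite mulr_sumr; apply: eq_bigr => y _; rewrite -ED mulrA.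
by rewrite charsum ?mulr0 // mulf_neq0 ?invr_eq0.
Qed.

Lemma K0 (al : F) : al != 0 -> Kp al 0 = -1.
Proof.
move=> al0; have := charsum _ al0; rewrite sum_nz mul0r E0 /Kp => h.
rewrite (eq_bigr (fun x => E (x * al))) => [|x _]; last by rewrite mul0r addr0 mulrC.
by apply: (addrI 1); rewrite h subrr.
Qed.

Lemma LHSid (al be : F) : al != 0 ->
  Kp al be ^+ 2 = \sum_(w : F | w != 0)
     (Kp al (be * (w + 2 + w^-1)) + (if w == -1 then p%:R else 0)).
Proof.
move=> al0; rewrite expr2 {1}/Kp mulr_suml.
transitivity (\sum_(x : F | x != 0) \sum_(w : F | w != 0)
   E (al * x + be * x^-1) * E (al * (x * w) + be * (x * w)^-1)).
  apply: eq_bigr => x x0; rewrite /Kp mulr_sumr (reindex_inj (mulfI x0)) /=.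
  by apply: eq_bigl => w; rewrite mulf_eq0 (negPf x0).
rewrite exchange_big; apply: eq_bigr => w w0.
case: (eqVneq w (-1)) => [-> | wn1].
  have -> : be * (-1 + 2 + (-1)^-1) = 0 by rewrite invrN1; ring.
  rewrite K0 //.
  rewrite (eq_bigr (fun _ => 1)) => [|x x0]; last first.
    rewrite -ED -E0; congr E; rewrite mulrN1 invrN; ring.
  rewrite (eq_bigl (fun x => x \in predC1 0)) // sumr_const cardC1 card_Fp //.
  rewrite -{2}(prednK p_gt0) -natr1; ring.
rewrite addr0.
have c0 : 1 + w != 0 by rewrite addrC addr_eq0.
rewrite /Kp [RHS](reindex_inj (mulIf c0)) /=.
apply: eq_big => [x | x x0]; first by rewrite mulf_eq0 (negPf c0) orbF.
rewrite -ED; congr E; field.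
by rewrite x0 w0 c0.
Qed.

Definition hh (w : F) : F * F := (w + 2 + w^-1, w - w^-1).
Definition hh' (pt : F * F) : F := (pt.1 + pt.2 - 2) / 2.

Lemma RHSid (al be : F) : be != 0 ->
  \sum_(y : F) chi (y ^+ 2 - 4 * y) * Kp al (y * be) =
  \sum_(w : F | w != 0) Kp al (be * (w + 2 + w^-1)).
Proof.
move=> be0; rewrite /chi.
rewrite (eq_bigr (fun y => \sum_(t : F | t ^+ 2 == y ^+ 2 - 4 * y) Kp al (y * be)
   - Kp al (y * be))); last first.
  move=> y _; rewrite mulrBl mul1r (mulr_natl (Kp al (y * be))) -sumr_const.
  by congr (_ - _); apply: eq_bigl => t; rewrite inE.
rewrite sumrB sumK0 // subr0.
rewrite pair_big_dep /=.
have t20 := two_neq0; have t40 := four_neq0.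
rewrite (reindex_onto hh hh'); last first.
  case=> y t; rewrite /= => /eqP ht.
  have hw : (hh' (y, t))^-1 = (y - t - 2) / 2.
    apply: mulr1_eq; rewrite /hh' /=.
    have -> : (y + t - 2) / 2 * ((y - t - 2) / 2) = ((y - 2) ^+ 2 - t ^+ 2) / 4.
      by field; rewrite t40 t20.
    by rewrite ht; field; rewrite t40.
  by rewrite /hh hw /hh' /=; congr pair; field; rewrite ?t20.
apply: eq_big => [w | w w0]; last by rewrite /= mulrC.
case: (eqVneq w 0) => [-> | w0].
  rewrite /hh /= invr0 subrr expr0n /= addr0 add0r.
  have -> : (2 : F) ^+ 2 - 4 * 2 = - 4 by ring.
  by rewrite eq_sym oppr_eq0 (negPf t40).
rewrite /hh /hh' /=.
have -> : (w - w^-1) ^+ 2 == (w + 2 + w^-1) ^+ 2 - 4 * (w + 2 + w^-1).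
  by apply/eqP; field; rewrite ?w0.
have -> : (w + 2 + w^-1 + (w - w^-1) - 2) / 2 == w by apply/eqP; field; rewrite ?w0 ?t20.
by [].
Qed.
End Fp.

Local Close Scope complex_scope.

Theorem mainTheorem1 (R : realType) (p : nat) (a b : int) :
  prime p -> (2 < p)%N -> ~~ (p%:Z %| a * b)%Z ->
  kloosterman R p a b ^+ 2 =
    p%:R + \sum_(1 <= l < p.+1)
             (legendre p (l%:Z ^+ 2 - 4 * l%:Z))%:~R * kloosterman R p a (l%:Z * b).
Proof.
move=> p_pr p2 hab.
have ab0 : ((a * b)%:~R : 'F_p) != 0 by rewrite (c1 _ p_pr).
rewrite rmorphM mulf_eq0 negb_or /= in ab0; case/andP: ab0 => a0 b0.
set al : 'F_p := a%:~R; set be : 'F_p := b%:~R.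
rewrite (klo R _ p_pr) (LHSid R _ p_pr p2) //.
pose H (y : 'F_p) := chi R p (y ^+ 2 - 4 * y) * Kp R p al (y * be).
rewrite (eq_bigr (fun l => H l%:R)); last first.
  move=> l _; rewrite (c3 R _ p_pr p2) (klo R _ p_pr) /H rmorphM rmorphB rmorphXn rmorphM /=.
  by [].
rewrite big_nat_recr ?prime_gt0 //=.
have -> : H p%:R = H (0%:R) by rewrite (pchar_Fp_0 p_pr).
rewrite [_ + H _]addrC -big_ltn ?prime_gt0 // (sumF R _ p_pr H) /H.
rewrite (RHSid R _ p_pr p2) // big_split /= addrC; congr (_ + _).
rewrite (bigD1 (-1)) ?oppr_eq0 ?oner_eq0 //= eqxx big1 ?addr0 //.
by move=> w /andP [_ /negPf ->].
Qed.
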